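(* For all integers $n\ge1$ and $r\ge1$: (a) $\displaystyle\sum_{k=1}^{n}\bigl(2^{\tau(k)}-1\bigr)\omega(n-k)=\sum_{\substack{m+k=n\\ m\ge1,\ k\ge0}}\Phi^\tau(m)\,\Omega_m(k)$; (b) $\displaystyle\sum_{k=1}^{n}\binom{\tau(k)}{r}\omega(n-k)=\sum_{\substack{m+k=n\\ m\ge1,\ k\ge0}}\Phi^\tau_r(m)\,\Omega_m(k)$.
   Context: $\tau(n)$ is the number of positive divisors of $n$. $\Phi^\tau(n)$ is the number of nonempty subsets $S$ of the set of positive divisors of $n$ such that $\gcd(\gcd(S),n)=1$, and $\Phi^\tau_r(n)$ is the number of such subsets of cardinality $r$. $\omega:\mathbb{Z}\to\mathbb{Z}$ is defined by $\omega(0)=1$; $\omega(m)=(-1)^j$ if $m=\frac{3j^2\pm j}{2}$ for some integer $j\ge1$; $\omega(m)=0$ otherwise (in particular for $m<0$). For $m\ge1$ and integer $k$, $\Omega_m(k)=\sum_{j\ge0}\omega(k-jm)=\omega(k)+\omega(k-m)+\omega(k-2m)+\cdots$. *)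

(* Defs.v *)
From mathcomp Require Import all_boot all_order all_algebra.
Set Implicit Arguments. Unset Strict Implicit. Unset Printing Implicit Defensive.
Import GRing.Theory Num.Theory.

Definition tau (n : nat) : nat := size (divisors n).

Definition divset (n : nat) : {set 'I_n.+1} :=
  [set d : 'I_n.+1 | (0 < d)%N && ((d : nat) %| n)].

(* gcd of a finite set of naturals (gcd of the empty set is 0) *)
Definition gcdS (n : nat) (S : {set 'I_n.+1}) : nat :=
  \big[gcdn/0%N]_(d in S) (d : nat).

Definition PhiTau (n : nat) : nat :=
  #|[set S : {set 'I_n.+1} |
      [&& S \subset divset n, S != set0 & gcdn (gcdS S) n == 1%N]]|.

Definition PhiTau_r (r n : nat) : nat :=
  #|[set S : {set 'I_n.+1} |
      [&& S \subset divset n, S != set0, gcdn (gcdS S) n == 1%N & #|S| == r]]|.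

(* omega on naturals: omega 0 = 1, omega m = (-1)^j if m = (3j^2 +- j)/2 for
   some j >= 1 (such j is necessarily <= m), and 0 otherwise. *)
Definition pent_index (m : nat) : option 'I_m.+1 :=
  [pick j : 'I_m.+1 | (0 < j)%N &&
     ((m.*2 == 3 * j ^ 2 + j) || (m.*2 == 3 * j ^ 2 - j))].

Definition omega_nat (m : nat) : int :=
  if m == 0%N then 1%R else
  match pent_index m with
  | Some j => ((-1) ^+ (j : nat))%R
  | None => 0%R
  end.

Definition omega (z : int) : int :=
  match z with
  | Posz m => omega_nat m
  | Negz _ => 0%R
  end.

(* Omega_m(k) = sum_{j>=0} omega(k - j m); for m >= 1 and k >= 0 all terms with
   j > k have negative argument, hence vanish, so the sum is truncated at j = k. *)
Definition Omega (m : nat) (k : int) : int :=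
  (\sum_(0 <= j < `|k|.+1) omega (k - (j * m)%:Z))%R.

(* Main.v *)
Require Import Defs.
From mathcomp Require Import all_boot all_order all_algebra.
Import GRing.Theory Num.Theory.

Lemma gcdS_dvd n (S : {set 'I_n.+1}) (d : 'I_n.+1) : d \in S -> gcdS S %| d.
Proof. by move=> Hd; rewrite /gcdS (bigD1 d) //= dvdn_gcdl. Qed.

Lemma dvd_gcdS n (S : {set 'I_n.+1}) x :
  (forall d : 'I_n.+1, d \in S -> x %| d) -> x %| gcdS S.
Proof.
move=> H; rewrite /gcdS; apply: (big_ind (fun y => x %| y)) => //.
- by move=> a b Ha Hb; rewrite dvdn_gcd Ha.

Qed.

Lemma card_divset k : 0 < k -> #|divset k| = tau k.
Proof.
move=> k0; rewrite /tau cardE -(size_map val); apply: perm_size.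
apply: uniq_perm; first by rewrite map_inj_uniq ?enum_uniq //; apply: val_inj.
  exact: divisors_uniq.
move=> x; rewrite -dvdn_divisors //; apply/mapP/idP.
- by case=> d; rewrite mem_enum inE => /andP[_ H] ->.
- move=> H; have xk : x < k.+1 by rewrite ltnS dvdn_leq.
  exists (Ordinal xk) => //; rewrite mem_enum inE /= H andbT.
  by rewrite lt0n; apply/eqP => x0; move: H; rewrite x0 dvd0n; move/eqP => k00; rewrite k00 in k0.
Qed.

Section Emb.
Variables (m k G : nat).
Hypothesis (hk : m * G = k) (G0 : 0 < G).

Definition emb (d : 'I_m.+1) : 'I_k.+1 := inord (d * G).

Lemma val_emb d : (emb d : nat) = d * G.
Proof.
rewrite /emb inordK // ltnS -hk leq_mul2r; case: d => /= d; rewrite ltnS => ->.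
by rewrite orbT.
Qed.

Lemma emb_inj : injective emb.
Proof.
move=> a b /(congr1 (@nat_of_ord _)); rewrite !val_emb => /eqP; rewrite eqn_pmul2r //.
by move/eqP; apply: val_inj.
Qed.

Definition F (T : {set 'I_m.+1}) : {set 'I_k.+1} := emb @: T.

Lemma gcdS_F T : gcdS (F T) = gcdS T * G.
Proof.
rewrite /gcdS /F big_imset /=; last by move=> x y _ _; apply: emb_inj.
rewrite (eq_bigr (fun d : 'I_m.+1 => (d : nat) * G)); last by move=> d _; rewrite val_emb.
apply/esym; apply: (big_morph (fun x => x * G)) => //.
by move=> x y; rewrite muln_gcdl.
Qed.

Lemma card_F T : #|F T| = #|T|.
Proof. by rewrite card_imset //; apply: emb_inj. Qed.

Lemma sub_F T : (F T \subset divset k) = (T \subset divset m).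
Proof.
apply/subsetP/subsetP => H d Hd.
- have := H (emb d) (imset_f _ Hd); rewrite !inE val_emb -hk muln_gt0 G0 andbT.
  by rewrite dvdn_pmul2r.
- case/imsetP: Hd => e He ->; rewrite inE val_emb -hk muln_gt0 G0 andbT dvdn_pmul2r //.
  by have := H e He; rewrite inE.
Qed.

Lemma F_eq0 T : (F T == set0) = (T == set0).
Proof. by rewrite /F imset_eq0. Qed.

Lemma F_pre (S : {set 'I_k.+1}) : (forall s : 'I_k.+1, s \in S -> G %| s) ->
  S = F [set d | emb d \in S].
Proof.
move=> H; apply/setP => s; apply/idP/imsetP.
- move=> Hs; have Gs := H s Hs.
  have sm : (s %/ G) < m.+1.
    by rewrite ltnS -(leq_pmul2r G0) divnK // hk -ltnS.
  exists (Ordinal sm); last by apply: ord_inj; rewrite val_emb /= divnK.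
  rewrite inE; have -> // : emb (Ordinal sm) = s.
  by apply: ord_inj; rewrite val_emb /= divnK.
- by case=> d; rewrite inE => Hd ->.
Qed.

End Emb.

Lemma keyF m k G (hk : m * G = k) (G0 : 0 < G) (P : pred nat) T :
  [&& F m k G T \subset divset k, F m k G T != set0, P #|F m k G T| & gcdS (F m k G T) == G] =
  [&& T \subset divset m, T != set0, gcdn (gcdS T) m == 1 & P #|T|].
Proof.
rewrite sub_F // F_eq0 // card_F // gcdS_F //.
case: (boolP (T \subset divset m)) => //= Hs.
case: (boolP (T == set0)) => //= /set0Pn [d Hd].
have : gcdS T %| m.
  apply: dvdn_trans (@gcdS_dvd _ _ _ Hd) _; move/subsetP: Hs => /(_ d Hd); rewrite inE.
  by case/andP.
by move/gcdn_idPl => ->; rewrite -{2}[G]mul1n eqn_pmul2r // andbC.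
Qed.

Lemma cardX (P : pred nat) m k : 0 < m -> 0 < k -> m %| k ->
  #|[set S : {set 'I_k.+1} | [&& S \subset divset k, S != set0, P #|S| & gcdS S == k %/ m]]|
  = #|[set T : {set 'I_m.+1} | [&& T \subset divset m, T != set0, gcdn (gcdS T) m == 1 & P #|T|]]|.
Proof.
move=> m0 k0 mk.
have hk : m * (k %/ m) = k by rewrite mulnC divnK.
have G0 : 0 < k %/ m by rewrite divn_gt0 // dvdn_leq.
rewrite -(card_imset _ (imset_inj (emb_inj m k (k %/ m) hk G0))).
apply: eq_card => S; rewrite inE; apply/idP/imsetP.
- case/and4P=> Hs Hn HP Hg.
  have HG : forall s : 'I_k.+1, s \in S -> k %/ m %| s.
    by move=> s Hsm; rewrite -(eqP Hg); apply: gcdS_dvd.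
  have E := @F_pre m k (k %/ m) hk G0 S HG.
  exists [set d | emb m k (k %/ m) d \in S]; last exact: E.
  rewrite inE -(keyF m k (k %/ m) hk G0) -E; exact/and4P.
- case=> T; rewrite inE => HT ->.
  by rewrite -(keyF m k (k %/ m) hk G0) in HT.
Qed.

Lemma divdiv k d : 0 < k -> d %| k -> k %/ (k %/ d) = d.
Proof. by move=> k0 dk; rewrite divnA // mulKn. Qed.

Lemma stepA (P : pred nat) n k : 0 < k -> k <= n ->
  #|[set S : {set 'I_k.+1} | [&& S \subset divset k, S != set0 & P #|S|]]|
  = \sum_(1 <= m < n.+1 | m %| k)
      #|[set T : {set 'I_m.+1} | [&& T \subset divset m, T != set0, gcdn (gcdS T) m == 1 & P #|T|]]|.
Proof.
move=> k0 kn.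
set fam := [set S : {set 'I_k.+1} | _].
rewrite big_nat_cond.
rewrite (eq_bigr (fun m => \sum_(S in fam) (gcdS S == k %/ m : nat))); last first.
  move=> m /andP[/andP[m1 _] mk]; rewrite -(cardX P m k) // -sum1_card big_mkcond /=.
  rewrite [RHS]big_mkcond /=; apply: eq_bigr => S _; rewrite !inE.
  by case: (_ \subset _); case: (S != set0); case: (P _); case: (_ == _).
rewrite exchange_big /= -sum1_card; apply: eq_bigr => S; rewrite inE.
case/and3P => Hs Hn _.
case/set0Pn: Hn => d Hd.
have dk : (d : nat) %| k by move/subsetP: Hs => /(_ d Hd); rewrite inE => /andP[].
have d0 : 0 < (d : nat) by move/subsetP: Hs => /(_ d Hd); rewrite inE => /andP[].
have gd := @gcdS_dvd _ _ _ Hd.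
have gk : gcdS S %| k := dvdn_trans gd dk.
have g0 : 0 < gcdS S := dvdn_gt0 d0 gd.
rewrite -big_nat_cond big_mkcond /=.
have Hm0 : k %/ gcdS S \in index_iota 1 n.+1.
  rewrite mem_index_iota divn_gt0 // dvdn_leq //= ltnS.
  by apply: leq_trans (leq_div _ _) kn.
rewrite (bigD1_seq _ Hm0 (iota_uniq _ _)) /=.
rewrite dvdn_div // divdiv // eqxx /= big1 //.
move=> m Hm; case: ifP => // mk; case: eqP => // Eg.
by move: Hm; rewrite Eg divdiv // eqxx.
Qed.

Lemma stepB1 k : 0 < k ->
  #|[set S : {set 'I_k.+1} | [&& S \subset divset k, S != set0 & xpredT #|S|]]| = 2 ^ tau k - 1.
Proof.
move=> k0.
have -> : [set S : {set 'I_k.+1} | [&& S \subset divset k, S != set0 & xpredT #|S|]]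
   = powerset (divset k) :\ set0.
  by apply/setP => S; rewrite !inE andbT andbC.
rewrite -card_divset // -card_powerset (cardsD1 set0 (powerset (divset k))).
by rewrite inE sub0set add1n subn1.
Qed.

Lemma stepB2 k r : 0 < r ->
  #|[set S : {set 'I_k.+1} | [&& S \subset divset k, S != set0 & #|S| == r]]| =
  'C(#|divset k|, r).
Proof.
move=> r0; rewrite -cards_draws; apply: eq_card => S; rewrite !inE.
case: (_ \subset _) => //=; case: eqP => // ->.
by rewrite cards0 eq_sym; case: r r0.
Qed.

Lemma PhiTauE m : PhiTau m =
  #|[set T : {set 'I_m.+1} | [&& T \subset divset m, T != set0, gcdn (gcdS T) m == 1 & xpredT #|T|]]|.
Proof. by apply: eq_card => S; rewrite !inE andbT. Qed.

From mathcomp Require Import zify.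
Local Open Scope ring_scope.

Lemma omega_neg (n k : nat) : (n < k)%N -> omega (n%:Z - k%:Z) = 0.
Proof.
move=> nk; have : n%:Z - k%:Z < 0 by rewrite subr_lt0 ltz_nat.
by case: (n%:Z - k%:Z).
Qed.

Lemma L1 (H : nat -> int) (m : nat) : (0 < m)%N -> forall N,
  \sum_(0 <= j < N) H (j.+1 * m)%N =
  \sum_(0 <= k < (N * m).+1) (if (0 < k)%N && (m %| k)%N then H k else 0).
Proof.
move=> m0; elim=> [|N IH].
  by rewrite big_geq // mul0n big_nat1.
rewrite big_nat_recr //= IH.
rewrite [RHS](big_cat_nat (n := (N * m).+1)) //; last by rewrite mulSn; lia.
congr (_ + _).
have -> : (N.+1 * m).+1 = (N * m + m).+1 by rewrite mulSn addnC.
rewrite big_nat_recr /=; last by lia.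
rewrite [(N.+1 * m)%N]mulSn [(m + _)%N]addnC.
have -> : (0 < N * m + m)%N by lia.
rewrite dvdn_addr ?dvdn_mull // dvdnn /=.
rewrite big1_seq ?add0r // => k; rewrite mem_index_iota => /andP[lo hi].
case: ifP => // /andP[_ mk]; exfalso.
have e : k = (N * m + (k - N * m))%N by lia.
rewrite e dvdn_addr ?dvdn_mull // in mk.
have := dvdn_leq _ mk; lia.
Qed.

Lemma sum_cut (F : nat -> int) a b c : (a <= b)%N -> (b <= c)%N ->
  \sum_(a <= i < c) F i = \sum_(a <= i < b) F i + \sum_(b <= i < c) F i.
Proof. exact: big_cat_nat. Qed.

Lemma LOmega (n m : nat) : (0 < m)%N -> (m <= n)%N ->
  Omega m (n%:Z - m%:Z) = \sum_(1 <= k < n.+1 | (m %| k)%N) omega (n%:Z - k%:Z).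
Proof.
move=> m0 mn; rewrite /Omega subzn //=.
rewrite (eq_bigr (fun j => omega (n%:Z - (j.+1 * m)%N%:Z))); last first.
  by move=> j _; rewrite -subzn // mulSn PoszD opprD addrA.
rewrite (L1 (fun k => omega (n%:Z - k%:Z))) //.
rewrite (@sum_cut _ 0 n.+1) //; last by rewrite mulSn; nia.
rewrite [X in _ + X]big1_seq ?addr0; last first.
  move=> k /andP[_]; rewrite mem_index_iota => /andP[lo _]; case: ifP => // _; rewrite omega_neg //.

rewrite big_ltn // add0r [RHS]big_mkcond /=.
by apply: eq_big_nat => k /andP[k1 _]; rewrite k1.
Qed.

Lemma GL n (g : nat -> int) :
 \sum_(1 <= k < n.+1) (\sum_(1 <= m < n.+1 | (m %| k)%N) g m) * omega (n%:Z - k%:Z)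
 = \sum_(1 <= m < n.+1) g m * Omega m (n%:Z - m%:Z).
Proof.
rewrite [RHS](eq_big_nat _ _ (F2 := fun m => \sum_(1 <= k < n.+1)
   (if (m %| k)%N then g m * omega (n%:Z - k%:Z) else 0))); last first.
  move=> m /andP[m1 mn]; rewrite LOmega // big_distrr [LHS]big_mkcond /=.
  by apply: eq_bigr => k _; case: ifP.
rewrite exchange_big /=; apply: eq_bigr => k _; rewrite big_distrl big_mkcond /=.
by apply: eq_bigr => m _; case: ifP => //; rewrite mul0r.
Qed.

Lemma Posz_sum (I : Type) (r : seq I) (P : pred I) (F : I -> nat) :
  ((\sum_(i <- r | P i) F i)%N)%:Z = \sum_(i <- r | P i) (F i)%:Z.
Proof. by apply: (big_morph Posz PoszD). Qed.

Theorem mainTheorem15 (n r : nat) (hn : (1 <= n)%N) (hr : (1 <= r)%N) :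
  (\sum_(1 <= k < n.+1) ((2 ^ tau k - 1)%N)%:Z * omega (n%:Z - k%:Z)
     = \sum_(1 <= m < n.+1) (PhiTau m)%:Z * Omega m (n%:Z - m%:Z))
  /\
  (\sum_(1 <= k < n.+1) ('C(tau k, r))%:Z * omega (n%:Z - k%:Z)
     = \sum_(1 <= m < n.+1) (PhiTau_r r m)%:Z * Omega m (n%:Z - m%:Z)).
Proof.
split; rewrite -GL; apply: eq_big_nat => k /andP[k1 kn]; congr (_ * _).
- rewrite -stepB1 // (stepA xpredT n) // Posz_sum.
  by apply: eq_bigr => m _; rewrite PhiTauE.
- rewrite -card_divset // -stepB2 // (stepA (fun x => x == r) n) // Posz_sum.
  by apply: eq_bigr.
Qed.
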